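(* Let $H,K$ be subgroups of $IA_n$ with $H\cap K=\{1\}$ and $K$ normalizing $H$, so that $HK=H\rtimes K\subseteq IA_n$. Suppose that: (1) the semi-direct product is almost-direct, i.e. $[K,H]\subseteq[H,H]$; (2) for every $i\ge1$, the images of $\mathcal A_i\cap H$ and $\mathcal A_i\cap K$ in $\mathcal A_i/\mathcal A_{i+1}$ intersect trivially (equivalently, no element of $H$ and element of $K$ induce the same nonzero derivation of the free Lie ring through the Johnson morphism); (3) the Andreadakis equality holds for $H$ and for $K$: $\Gamma_j(H)=\mathcal A_j\cap H$ and $\Gamma_j(K)=\mathcal A_j\cap K$ for all $j\ge1$. Then the Andreadakis equality holds for $H\rtimes K$: $\Gamma_j(H\rtimes K)=\mathcal A_j\cap (H\rtimes K)$ for all $j\ge1$.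
   Context: $F_n$ is the free group on $n$ generators, $\Gamma_*$ denotes the lower central series ($\Gamma_1(G)=G$, $\Gamma_{k+1}(G)=[G,\Gamma_k(G)]$, $[x,y]=xyx^{-1}y^{-1}$). $IA_n$ is the subgroup of $\mathrm{Aut}(F_n)$ of automorphisms acting trivially on $F_n^{ab}$. The Andreadakis filtration $IA_n=\mathcal A_1\supseteq\mathcal A_2\supseteq\cdots$ is defined by: $\mathcal A_j$ is the subgroup of automorphisms acting trivially on $F_n/\Gamma_{j+1}(F_n)$, i.e. $\sigma(x)x^{-1}\in\Gamma_{j+1}(F_n)$ for all $x\in F_n$. The Johnson morphism sends the class of $\sigma\in\mathcal A_j$ to the degree-$j$ derivation of the free Lie ring $\mathcal L(F_n)=\bigoplus_k\Gamma_k(F_n)/\Gamma_{k+1}(F_n)$ induced by $x\mapsto\sigma(x)x^{-1}$; it is injective on $\bigoplus_j\mathcal A_j/\mathcal A_{j+1}$. *)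

(* Defs.v *)
From mathcomp Require Import all_boot.
Set Implicit Arguments. Unset Strict Implicit. Unset Printing Implicit Defensive.

Record gops := GOps {
  gcar :> Type;
  gmul : gcar -> gcar -> gcar;
  ginv : gcar -> gcar;
  gone : gcar }.

Inductive gen (G : gops) (S : G -> Prop) : G -> Prop :=
| gen_in x : S x -> gen S x
| gen_one : gen S (gone G)
| gen_mul x y : gen S x -> gen S y -> gen S (gmul x y)
| gen_inv x : gen S x -> gen S (ginv x).

Definition comm (G : gops) (x y : G) : G :=
  gmul (gmul (gmul x y) (ginv x)) (ginv y).

Definition commsub (G : gops) (A B : G -> Prop) : G -> Prop :=
  gen (fun c => exists x y, A x /\ B y /\ c = comm x y).

(* lcs0 H m = Gamma_{m+1}(H) *)
Fixpoint lcs0 (G : gops) (H : G -> Prop) (m : nat) : G -> Prop :=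
  match m with
  | 0 => H
  | m'.+1 => commsub H (lcs0 H m')
  end.

Definition Gamma (G : gops) (H : G -> Prop) (j : nat) : G -> Prop :=
  lcs0 H j.-1.

Definition letter (n : nat) := ('I_n * bool)%type.  (* (i,false)=x_i, (i,true)=x_i^-1 *)
Definition linv n (x : letter n) : letter n := (x.1, ~~ x.2).

Definition push n (x : letter n) (w : seq (letter n)) : seq (letter n) :=
  match w with
  | y :: w' => if y == linv x then w' else x :: w
  | [::] => [:: x]
  end.

Definition red n (w : seq (letter n)) : seq (letter n) := foldr (@push n) [::] w.

Definition reducedb n (w : seq (letter n)) : bool :=
  sorted (fun x y => y != linv x) w.

Lemma push_reduced n (x : letter n) w : reducedb w -> reducedb (push x w).
Proof.
case: w => [|y w] //= Hw.
case: ifP => Hy; first by move: Hw; rewrite /reducedb /=; case: w => //= z w /andP[].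
by rewrite /reducedb /= Hy.
Qed.

Lemma red_reduced n (w : seq (letter n)) : reducedb (red w).
Proof. by elim: w => [|x w IH] //=; apply: push_reduced. Qed.

Definition FG (n : nat) := {w : seq (letter n) | reducedb w}.

Definition FG_of n (w : seq (letter n)) : FG n := exist _ (red w) (red_reduced w).

Definition fmul n (u v : FG n) : FG n := FG_of (sval u ++ sval v).
Definition finv n (u : FG n) : FG n := FG_of (rev (map (@linv n) (sval u))).
Definition fone n : FG n := FG_of [::].

Definition Fn (n : nat) : gops := GOps (@fmul n) (@finv n) (fone n).

Record aut (n : nat) := Aut {
  afwd : FG n -> FG n;
  abwd : FG n -> FG n;
  afwd_hom : forall x y, afwd (fmul x y) = fmul (afwd x) (afwd y);
  abwd_fwd : forall x, abwd (afwd x) = x;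
  afwd_bwd : forall x, afwd (abwd x) = x }.

Lemma comp_hom n (a b : aut n) x y :
  afwd a (afwd b (fmul x y)) = fmul (afwd a (afwd b x)) (afwd a (afwd b y)).
Proof. by rewrite !afwd_hom. Qed.
Lemma comp_bf n (a b : aut n) x : abwd b (abwd a (afwd a (afwd b x))) = x.
Proof. by rewrite !abwd_fwd. Qed.
Lemma comp_fb n (a b : aut n) x : afwd a (afwd b (abwd b (abwd a x))) = x.
Proof. by rewrite !afwd_bwd. Qed.

Definition amul n (a b : aut n) : aut n :=
  @Aut n (fun x => afwd a (afwd b x)) (fun x => abwd b (abwd a x))
    (comp_hom a b) (comp_bf a b) (comp_fb a b).

Lemma inv_hom n (a : aut n) x y :
  abwd a (fmul x y) = fmul (abwd a x) (abwd a y).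
Proof.
by rewrite -{1}(afwd_bwd a x) -{1}(afwd_bwd a y) -afwd_hom abwd_fwd.
Qed.

Definition ainv n (a : aut n) : aut n :=
  @Aut n (abwd a) (afwd a) (inv_hom a) (afwd_bwd a) (abwd_fwd a).

Definition aone n : aut n :=
  @Aut n id id (fun _ _ => erefl) (fun _ => erefl) (fun _ => erefl).

Definition AutF (n : nat) : gops := GOps (@amul n) (@ainv n) (aone n).

(* Andreadakis filtration: A_j = automorphisms acting trivially on
   F_n / Gamma_{j+1}(F_n), i.e. sigma(x) x^-1 in Gamma_{j+1}(F_n) for all x.
   IA_n = A_1. *)
Definition Andreadakis (n j : nat) (a : aut n) : Prop :=
  forall x : FG n, Gamma (G := Fn n) (fun _ => True) j.+1 (fmul (afwd a x) (finv x)).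

Definition IA (n : nat) (a : aut n) : Prop := @Andreadakis n 1 a.

Definition is_subgroup n (H : aut n -> Prop) : Prop :=
  [/\ H (aone n),
      forall a b, H a -> H b -> H (amul a b)
    & forall a, H a -> H (ainv a)].

Definition prodset n (H K : aut n -> Prop) : aut n -> Prop :=
  fun a => exists h k, H h /\ K k /\ a = amul h k.

Definition andreadakis_eq n (H : aut n -> Prop) : Prop :=
  forall j, 1 <= j -> forall a,
    Gamma (G := AutF n) H j a <-> (@Andreadakis n j a /\ H a).

(* Main.v *)
Require Import Defs.
From mathcomp Require Import all_boot.
From Stdlib Require Import FunctionalExtensionality ProofIrrelevance.
Set Implicit Arguments. Unset Strict Implicit. Unset Printing Implicit Defensive.


Section FreeGroup.
Variable n : nat.
Implicit Types (x y : letter n) (u v w : seq (letter n)).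

Lemma linvK x : linv (linv x) = x.
Proof. by case: x => i b; rewrite /linv /= negbK. Qed.

Lemma reduced_cons x w : reducedb (x :: w) -> reducedb w.
Proof. by rewrite /reducedb /=; case: w => //= y w /andP[]. Qed.

Lemma push_cancel x w : reducedb w -> push x (push (linv x) w) = w.
Proof.
case: w => [|y w] /=; first by rewrite eqxx.
move=> Hw; case: ifP => Hy.
  move/eqP: Hy; rewrite linvK => Ey; subst y.
  case: w Hw => [|z w] //= /andP[Hz _].
  by rewrite (negbTE Hz).
by rewrite /= eqxx.
Qed.

Lemma push_cancel' x w : reducedb w -> push (linv x) (push x w) = w.
Proof. by move=> Hw; rewrite -{2}(linvK x) push_cancel. Qed.

Definition act u w := foldr (@push n) w u.

Lemma act_reduced u w : reducedb w -> reducedb (act u w).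
Proof. by elim: u => //= x u IH Hw; apply: push_reduced; apply: IH. Qed.

Lemma red_act u : red u = act u [::].
Proof. by []. Qed.

Lemma act_red u w : reducedb w -> act (red u) w = act u w.
Proof.
move=> Hw; elim: u => [|x u IH] //=.
rewrite -IH.
have Hr := red_reduced u.
case E: (red u) => [|y r] //=.
case: ifP => Hy /=.
  move/eqP: Hy => ->; rewrite push_cancel //.
  by apply: act_reduced.
done.
Qed.

Lemma red_id w : reducedb w -> red w = w.
Proof.
elim: w => [|x w IH] //= Hw.
rewrite IH; last exact: reduced_cons Hw.
case: w Hw {IH} => [|y w] //= /andP[Hy _].
by rewrite (negbTE Hy).
Qed.

Lemma act_cat u v w : act (u ++ v) w = act u (act v w).
Proof. by rewrite /act foldr_cat. Qed.

Lemma act_inv u w : reducedb w -> act (rev (map (@linv n) u)) (act u w) = w.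
Proof.
elim: u w => [|x u IH] w Hw //=.
rewrite rev_cons -cats1 act_cat /= push_cancel'; first exact: IH.
exact: act_reduced.
Qed.

Lemma FG_eq (a b : FG n) : sval a = sval b -> a = b.
Proof.
case: a => a Ha; case: b => b Hb /= E; subst b.
by rewrite (bool_irrelevance Ha Hb).
Qed.

Lemma red_cat u v : red (u ++ v) = act u (red v).
Proof. by rewrite /red foldr_cat. Qed.

Lemma fmulA (a b c : FG n) : fmul a (fmul b c) = fmul (fmul a b) c.
Proof.
apply: FG_eq; case: a => a Ha; case: b => b Hb; case: c => c Hc /=.
rewrite !red_cat (red_id Hc) (red_id Hb) red_id ?act_reduced //.
have -> : act a b = red (a ++ b) by rewrite red_cat (red_id Hb).
by rewrite act_red // act_cat.
Qed.

Lemma fmul1g (a : FG n) : fmul (fone n) a = a.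
Proof. by apply: FG_eq; case: a => a Ha /=; rewrite red_id. Qed.

Lemma fmulg1 (a : FG n) : fmul a (fone n) = a.
Proof. by apply: FG_eq; case: a => a Ha /=; rewrite cats0 red_id. Qed.

Lemma fmulVg (a : FG n) : fmul (Defs.finv a) a = fone n.
Proof.
apply: FG_eq; case: a => a Ha /=.
rewrite red_cat act_red ?red_reduced // (red_id Ha).
by rewrite -{2}(red_id Ha) red_act act_inv.
Qed.

Lemma fmulgV (a : FG n) : fmul a (Defs.finv a) = fone n.
Proof.
apply: FG_eq; case: a => a Ha /=.
rewrite red_cat (red_id (red_reduced _)) red_act.
have := @act_inv (rev (map (@linv n) a)) [::] is_true_true.
by rewrite map_rev revK (mapK linvK).
Qed.
End FreeGroup.


Declare Scope grp_scope.
Delimit Scope grp_scope with grp.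
Notation "x * y" := (gmul x y) : grp_scope.
Notation "x ^-1" := (ginv x) : grp_scope.

Section Generic.
Variable G : gops.
Local Open Scope grp_scope.
Implicit Types (x y z : G) (S T : G -> Prop).

Lemma gen_ind' S (P : G -> Prop) :
  (forall x, S x -> P x) -> P (gone G) ->
  (forall x y, P x -> P y -> P (x * y)) -> (forall x, P x -> P (x^-1)) ->
  forall x, gen S x -> P x.
Proof. by move=> H1 H2 H3 H4 x; elim=> //; auto. Qed.

Lemma gen_mono S T x : (forall y, S y -> T y) -> gen S x -> gen T x.
Proof.
move=> ST; elim=> [y /ST|||]; [exact: gen_in|exact: gen_one|by move=> *; apply: gen_mul|by move=> *; apply: gen_inv].
Qed.

Definition closed T := [/\ T (gone G), forall x y, T x -> T y -> T (x * y)
  & forall x, T x -> T (x^-1)].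

Lemma gen_closed S T x : closed T -> (forall y, S y -> T y) -> gen S x -> T x.
Proof. by case=> T1 TM TV ST; apply: gen_ind'. Qed.

Lemma lcs0_closed S m : closed S -> closed (lcs0 S m).
Proof.
case: m => [//|m] _ /=; split; [exact: gen_one|by move=> *; apply: gen_mul|by move=> *; apply: gen_inv].
Qed.

Lemma lcs0_sub S T m x : closed T -> (forall y, S y -> T y) -> lcs0 S m x -> T x.
Proof.
move=> CT ST; elim: m x => [|m IH] x /=; first exact: ST.
apply: gen_closed => // c [a [b [Ha [Hb ->]]]].
case: CT => T1 TM TV; rewrite /comm; auto.
Qed.

Lemma lcs0_mono S T m x : (forall y, S y -> T y) -> lcs0 S m x -> lcs0 T m x.
Proof.
move=> ST; elim: m x => [|m IH] x /=; first exact: ST.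
apply: gen_mono => c [a [b [Ha [Hb ->]]]].
by exists a, b; split; [apply: ST|split; [apply: IH|]].
Qed.

Hypothesis mulA : forall x y z, x * (y * z) = x * y * z.
Hypothesis mul1g : forall x, gone G * x = x.
Hypothesis mulg1 : forall x, x * gone G = x.
Hypothesis mulVg : forall x, x^-1 * x = gone G.
Hypothesis mulgV : forall x, x * x^-1 = gone G.

Lemma mulgA' x y z : x * y * z = x * (y * z). Proof. by rewrite mulA. Qed.
Lemma mulKg x y : x^-1 * (x * y) = y. Proof. by rewrite mulA mulVg mul1g. Qed.
Lemma mulKVg x y : x * (x^-1 * y) = y. Proof. by rewrite mulA mulgV mul1g. Qed.
Lemma invg_uniq x y : x * y = gone G -> y = x^-1.
Proof. by move=> E; rewrite -(mulg1 (x^-1)) -E mulKg. Qed.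
Lemma invK x : x^-1^-1 = x.
Proof. by apply: esym; apply: invg_uniq; rewrite mulVg. Qed.
Lemma invM x y : (x * y)^-1 = y^-1 * x^-1.
Proof. by apply: esym; apply: invg_uniq; rewrite mulgA' mulKVg mulgV. Qed.
Lemma inv1 : (gone G)^-1 = gone G.
Proof. by apply: esym; apply: invg_uniq; rewrite mul1g. Qed.

Ltac gsimpl := repeat (rewrite ?mulgA' ?invM ?invK ?inv1 ?mulKg ?mulKVg ?mulgV ?mulVg ?mul1g ?mulg1).

Lemma comm_inv x y : (comm x y)^-1 = comm y x.
Proof. rewrite /comm; gsimpl; done. Qed.

Lemma comm_mull x y z : comm (x * y) z = x * comm y z * x^-1 * comm x z.
Proof. rewrite /comm; gsimpl; done. Qed.

Lemma comm_invl x z : comm (x^-1) z = x^-1 * (comm x z)^-1 * x.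
Proof. rewrite /comm; gsimpl; done. Qed.

Lemma comm_conj x y z : x * comm y z * x^-1 = comm (x * y * x^-1) (x * z * x^-1).
Proof. rewrite /comm; gsimpl; done. Qed.

Definition hwT x y z := x * comm (comm (x^-1) y) z * x^-1.

Lemma hall_witt x y z : hwT x y z * (hwT z x y * hwT y z x) = gone G.
Proof. rewrite /hwT /comm; gsimpl; done. Qed.


Definition L m := lcs0 (fun _ : G => True) m.

Lemma L_closed m : closed (L m).
Proof. by apply: lcs0_closed. Qed.

Lemma L1 m : L m (gone G). Proof. by case: (L_closed m). Qed.
Lemma LM m x y : L m x -> L m y -> L m (x * y). Proof. by case: (L_closed m) => _ H _; apply: H. Qed.
Lemma LV m x : L m x -> L m (x^-1). Proof. by case: (L_closed m) => _ _ H; apply: H. Qed.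
Lemma LVE m x : L m (x^-1) -> L m x. Proof. by move/LV; rewrite invK. Qed.

Lemma L_commR m x y : L m y -> L m.+1 (comm x y).
Proof. by move=> Hy; apply: gen_in; exists x, y. Qed.

Lemma L_commL m x y : L m x -> L m.+1 (comm x y).
Proof. by move=> Hx; apply: LVE; rewrite comm_inv; apply: L_commR. Qed.

Lemma L_conj m x y : L m y -> L m (x * y * x^-1).
Proof.
elim: m x y => [//|m IH] x y /=.
move=> Hy; elim/gen_ind': Hy.
- move=> c [a [b [_ [Hb ->]]]]; rewrite comm_conj; apply: L_commR; exact: IH.
- by rewrite mulg1 mulgV; apply: gen_one.
- move=> a b Ha Hb.
  have -> : x * (a * b) * x^-1 = (x * a * x^-1) * (x * b * x^-1) by gsimpl.
  exact: gen_mul.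
- move=> a Ha.
  have -> : x * a^-1 * x^-1 = (x * a * x^-1)^-1 by gsimpl.
  exact: gen_inv.
Qed.

Lemma L_dec m y : L m.+1 y -> L m y.
Proof.
elim: m y => [//|m IH] y /= H.
apply: gen_mono H => c [a [b [Ha [Hb ->]]]].
by exists a, b; split=> //; split=> //; apply: IH.
Qed.

Lemma L_le m k y : m <= k -> L k y -> L m y.
Proof.
move=> /subnK <-; elim: (k - m) y => [|d IH] y //=.
by rewrite addSn => /L_dec; apply: IH.
Qed.

Lemma L_LL a b x y : L a x -> L b y -> L (a + b).+1 (comm x y).
Proof.
elim: a b x y => [|a IH] b x y Hx Hy.
  by rewrite add0n; apply: L_commR.
move: Hx => /= Hx; move: y Hy.
pose P g := forall y, L b y -> L (a.+1 + b).+1 (comm g y).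
suff : P x by apply.
elim/gen_ind': Hx; rewrite /P.
- move=> c [u [v [_ [Hv ->]]]] y Hy.
  set N := (a.+1 + b).+1.
  have HT : L N (hwT (u^-1) v y).
    have E := invg_uniq (hall_witt (u^-1) v y).
    apply: LVE; rewrite -E; apply: LM.
    + rewrite /hwT; apply: L_conj; apply: LVE; rewrite comm_inv.
      have := IH b.+1 v _ Hv (L_commL (u^-1) (LV Hy)).
      by rewrite /N addnS addSn.
    + rewrite /hwT; apply: L_conj; apply: L_commL.
      have := IH b _ _ (LV Hv) Hy.
      by rewrite /N addSn.
  have := L_conj u HT; rewrite /hwT invK.
  have -> : u * (u^-1 * comm (comm u v) y * u) * u^-1 = comm (comm u v) y by rewrite /comm; gsimpl; done.
  done.
- by move=> y _; rewrite /comm mul1g inv1 mulg1 mulgV; apply: L1.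
- move=> g1 g2 H1 H2 y Hy; rewrite comm_mull.
  apply: LM; last exact: H1.
  exact: L_conj (H2 _ Hy).
- move=> g H1 y Hy; rewrite comm_invl.
  have := L_conj (g^-1) (LV (H1 _ Hy)); by rewrite invK.
Qed.


Section Hom.
Variable f : G -> G.
Hypothesis fM : forall x y, f (x * y) = f x * f y.

Lemma f1 : f (gone G) = gone G.
Proof.
have E : f (gone G) * f (gone G) = f (gone G) by rewrite -fM mul1g.
by rewrite -(mulKg (f (gone G)) (f (gone G))) E mulVg.
Qed.

Lemma fV x : f (x^-1) = (f x)^-1.
Proof. by apply: invg_uniq; rewrite -fM mulgV f1. Qed.

Lemma f_comm x y : f (comm x y) = comm (f x) (f y).
Proof. by rewrite /comm !fM !fV. Qed.

Lemma fL m y : L m y -> L m (f y).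
Proof.
elim: m y => [//|m IH] y /= Hy; elim/gen_ind': Hy.
- move=> c [a [b [_ [Hb ->]]]]; rewrite f_comm; apply: L_commR; exact: IH.
- by rewrite f1; apply: gen_one.
- by move=> a b Ha Hb; rewrite fM; apply: gen_mul.
- by move=> a Ha; rewrite fV; apply: gen_inv.
Qed.

Definition Af p := forall x, L p (f x * x^-1).

Lemma fA_L p q y : Af p -> L q y -> L (p + q) (f y * y^-1).
Proof.
move=> Hf; elim: q y => [|q IH] y; first by rewrite addn0.
move=> /= Hy; rewrite addnS; elim/gen_ind': Hy.
- move=> c [z [w [_ [Hw ->]]]].
  set N := (p + q).+1.
  have Hz := Hf z; have Hw' := IH _ Hw.
  set zeta := f z * z^-1 in Hz; set om := f w * w^-1 in Hw'.
  have Ez : f z = zeta * z by rewrite /zeta; gsimpl.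
  have Ew : f w = om * w by rewrite /om; gsimpl.
  rewrite f_comm Ez Ew.
  have E1 : comm (zeta * z) (om * w) * (comm (zeta * z) w)^-1
      = comm (zeta * z) om * comm om (comm (zeta * z) w) by rewrite /comm; gsimpl; done.
  have E2 : comm (zeta * z) w * (comm z w)^-1
      = comm zeta (comm z w) * (comm z w * comm zeta w * (comm z w)^-1) by rewrite /comm; gsimpl; done.
  have -> : comm (zeta * z) (om * w) * (comm z w)^-1 =
     (comm (zeta * z) (om * w) * (comm (zeta * z) w)^-1) * (comm (zeta * z) w * (comm z w)^-1)
     by gsimpl.
  rewrite E1 E2; apply: LM; apply: LM.
  + by apply: L_commR.
  + by have := L_LL (y := comm (zeta * z) w) Hw' (I : L 0 (comm (zeta * z) w)); rewrite addn0.
  + apply: (@L_le _ ((p + q.+1).+1)); first by rewrite /N addnS ltnW.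
    by apply: L_LL => //; apply: L_commR.
  + by apply: L_conj; rewrite /N; apply: L_LL.
- by rewrite f1 inv1 mulg1; apply: gen_one.
- move=> a b Ha Hb.
  have -> : f (a * b) * (a * b)^-1 = (f a * (f b * b^-1) * (f a)^-1) * (f a * a^-1)
    by rewrite fM; gsimpl.
  apply: gen_mul => //.
  exact: (L_conj (m := (p + q).+1)).
- move=> a Ha.
  have -> : f (a^-1) * a^-1^-1 = (f a)^-1 * (f a * a^-1)^-1 * (f a)^-1^-1
    by rewrite fV; gsimpl.
  by apply: (L_conj (m := (p+q).+1)); apply: gen_inv.
Qed.
End Hom.

Lemma AA p q f g : (forall x y, f (x * y) = f x * f y) -> (forall x y, g (x * y) = g x * g y) ->
  Af f p -> Af g q -> forall z, L (p + q) (f (g z) * (g (f z))^-1).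
Proof.
move=> fM gM Hf Hg z.
set al := f z * z^-1; set be := g z * z^-1.
have Ef : f z = al * z by rewrite /al; gsimpl.
have Eg : g z = be * z by rewrite /be; gsimpl.
rewrite Ef Eg fM gM Ef Eg.
have -> : f be * (al * z) * (g al * (be * z))^-1
   = (f be * be^-1) * comm be al * (g al * al^-1)^-1 by rewrite /comm; gsimpl; done.
apply: LM; first apply: LM.
- exact: fA_L (Hg z).
- apply: (@L_le _ (q + p).+1); first by rewrite addnC leqnSn.
  exact: L_LL (Hg z) (Hf z).
- by apply: LV; rewrite addnC; apply: (fA_L gM Hg (Hf z)).
Qed.

End Generic.


Section Aut.
Variable n : nat.
Implicit Types (a b h k : aut n) (x y : FG n).

Definition FnL := (@fmulA n, @fmul1g n, @fmulg1 n, @fmulVg n, @fmulgV n).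

Lemma aut_eq a b : (forall x, afwd a x = afwd b x) -> (forall x, abwd a x = abwd b x) -> a = b.
Proof.
case: a => f g p1 p2 p3; case: b => f' g' q1 q2 q3 /= E1 E2.
have ? := functional_extensionality _ _ E1; have ? := functional_extensionality _ _ E2.
subst f' g'; f_equal; apply: proof_irrelevance.
Qed.

Lemma ainvK a : ainv (ainv a) = a.
Proof. by apply: aut_eq. Qed.

Lemma A_hom a : forall x y, afwd a (fmul x y) = fmul (afwd a x) (afwd a y).
Proof. exact: afwd_hom. Qed.

Lemma A_Af j a : Andreadakis j a <-> Af (G := Fn n) (afwd a) j.
Proof. by []. Qed.

Lemma A_one j : Andreadakis j (aone n).
Proof. move=> x /=; rewrite fmulgV; exact: (L1 (Fn n) j). Qed.

Lemma A_mul j a b : Andreadakis j a -> Andreadakis j b -> Andreadakis j (amul a b).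
Proof.
move=> Ha Hb x /=.
have -> : fmul (afwd a (afwd b x)) (Defs.finv x) =
  fmul (fmul (afwd a (afwd b x)) (Defs.finv (afwd b x))) (fmul (afwd b x) (Defs.finv x)).
  by rewrite -fmulA (fmulA (Defs.finv _)) fmulVg fmul1g.
exact: (LM (G := Fn n) (Ha _) (Hb _)).
Qed.

Lemma A_inv j a : Andreadakis j a -> Andreadakis j (ainv a).
Proof.
move=> Ha x /=.
have E : x = afwd a (abwd a x) by rewrite afwd_bwd.
set y := abwd a x; rewrite {1}E.
have -> : fmul y (Defs.finv (afwd a y)) = Defs.finv (fmul (afwd a y) (Defs.finv y)).
  apply: (@invg_uniq (Fn n) (@fmulA n) (@fmul1g n) (@fmulg1 n) (@fmulVg n)) => /=.
  by rewrite -fmulA (fmulA (Defs.finv y)) fmulVg fmul1g fmulgV.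
exact: (LV (G := Fn n) (Ha _)).
Qed.

Lemma A_le i j a : i <= j -> Andreadakis j a -> Andreadakis i a.
Proof. by move=> Hij Ha x; apply: (L_le (G := Fn n) Hij (Ha x)). Qed.

Lemma A_comm p q a b : Andreadakis p a -> Andreadakis q b ->
  Andreadakis (p + q) (comm (G := AutF n) a b).
Proof.
move=> Ha Hb x /=.
have := @AA (Fn n) (@fmulA n) (@fmul1g n) (@fmulg1 n) (@fmulVg n) (@fmulgV n) p q _ _ (afwd_hom a) (afwd_hom b) Ha Hb
   (abwd a (abwd b x)).
by rewrite /= !afwd_bwd.
Qed.
End Aut.


Theorem mainTheorem6 (n : nat) (H K : aut n -> Prop) :
  is_subgroup H -> is_subgroup K ->
  (forall a, H a -> IA a) -> (forall a, K a -> IA a) ->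
  (* H cap K = 1 *)
  (forall a, H a -> K a -> a = aone n) ->
  (* K normalizes H *)
  (forall k h, K k -> H h -> H (amul (amul k h) (ainv k))) ->
  (* (1) almost-direct: [K,H] subset [H,H] *)
  (forall a, commsub (G := AutF n) K H a -> Gamma (G := AutF n) H 2 a) ->
  (* (2) images of A_i cap H and A_i cap K in A_i/A_{i+1} intersect trivially *)
  (forall i, 1 <= i -> forall h k, H h -> K k ->
     @Andreadakis n i h -> @Andreadakis n i k ->
     @Andreadakis n i.+1 (amul (ainv h) k) -> @Andreadakis n i.+1 h) ->
  (* (3) Andreadakis equality for H and K *)
  andreadakis_eq H -> andreadakis_eq K ->
  andreadakis_eq (prodset H K).
Proof.
move=> [H1 HM HV] [K1 KM KV] HIA KIA _ Hnorm _ H2 H3 K3 j Hj a.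
set G := prodset H K.
have CG : closed (G := AutF n) G.
  split.
  - exists (aone n), (aone n); split=> //; split=> //; exact: aut_eq.
  - move=> _ _ [h [k [Hh [Kk ->]]]] [h' [k' [Hh' [Kk' ->]]]].
    exists (amul h (amul (amul k h') (ainv k))), (amul k k'); split.
      by apply: HM => //; apply: Hnorm.
    split; first exact: KM.
    by apply: aut_eq => x /=; rewrite ?abwd_fwd ?afwd_bwd.
  - move=> _ [h [k [Hh [Kk ->]]]].
    exists (amul (amul (ainv k) (ainv h)) (ainv (ainv k))), (ainv k); split.
      by apply: Hnorm; [apply: KV|apply: HV].
    split; first exact: KV.
    by apply: aut_eq => x /=; rewrite ?abwd_fwd ?afwd_bwd.
rewrite /Gamma -(prednK Hj) /=; move: (j.-1) Hj => m _.
split.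
- move=> Ha; split; last first.
    by apply: (lcs0_sub CG) Ha.
  elim: m a Ha => [|m IH] a /=.
    by move=> [h [k [Hh [Kk ->]]]]; apply: A_mul; [apply: HIA|apply: KIA].
  move=> Ha; apply: (gen_closed _ _ Ha).
    split; [exact: A_one|by move=> *; apply: A_mul|by move=> *; apply: A_inv].
  move=> _ [x [y [Gx [Hy ->]]]].
  have := A_comm (p := 1) (q := m.+1) _ (IH _ Hy).
  rewrite add1n; apply.
  by case: Gx => h [k [Hh [Kk ->]]]; apply: A_mul; [apply: HIA|apply: KIA].
- move=> [Ha [h [k [Hh [Kk Ea]]]]]; subst a.
  have Hik : forall i, 0 < i <= m.+1 -> Andreadakis i h /\ Andreadakis i k.
    elim=> [//|i IH] /andP[_ Hi].
    case: i IH Hi => [|i] IH Hi; first by split; [apply: HIA|apply: KIA].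
    have [Ahi Aki] := IH (ltnW Hi).
    have Ahk : Andreadakis i.+2 (amul h k) by apply: (A_le Hi).
    have Ah' : Andreadakis i.+2 (ainv h).
      apply: (H2 i.+1 erefl (ainv h) k (HV _ Hh) Kk (A_inv Ahi) Aki).
      by rewrite ainvK.
    have Ah : Andreadakis i.+2 h by rewrite -(ainvK h); apply: A_inv.
    split=> //.
    have -> : k = amul (ainv h) (amul h k).
      by apply: aut_eq => x /=; rewrite ?abwd_fwd ?afwd_bwd.
    exact: A_mul.
  have [Ah Ak] := Hik m.+1 (leqnn _).
  have := proj2 (H3 m.+1 erefl h) (conj Ah Hh) => /= Lh.
  have := proj2 (K3 m.+1 erefl k) (conj Ak Kk) => /= Lk.
  have [_ LM _] := lcs0_closed m CG.
  apply: LM.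
    apply: lcs0_mono Lh => y Hy; exists y, (aone n); split=> //; split=> //.
    by apply: aut_eq.
  apply: lcs0_mono Lk => y Hy; exists (aone n), y; split=> //; split=> //.
  by apply: aut_eq.
Qed.
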